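(* Let $L$ be a finite lattice and let $\iota\colon L\to BC(L)$, $x\mapsto{\uparrow}x\cap\mathcal{M}(L)$. For every distributive lattice $\hat L$ for which there exists a join-semilattice embedding $\varphi\colon L\to\hat L$, there exists a join-semilattice embedding $\varepsilon\colon BC(L)\to\hat L$ such that $\varphi=\varepsilon\circ\iota$.
   Context: For a finite lattice $L$, $\mathcal{M}(L)$ denotes the set of meet-irreducible elements of $L$ (elements $x$ such that $x=\bigwedge X$ implies $x\in X$ for all $X\subseteq L$), ordered by the order of $L$; ${\uparrow}x=\{a\in L\mid a\ge x\}$. For an ordered set $P$, $\mathcal{F}(P)$ is the set of order filters (up-sets) of $P$. The (up-set) Birkhoff completion is $BC(L):=(\mathcal{F}(\mathcal{M}(L)),\supseteq)$, whose binary join is intersection. A join-semilattice embedding between lattices is an injective map preserving binary joins. *)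

(* Defs.v *)
From HB Require Import structures.
From mathcomp Require Import all_boot all_order.
Set Implicit Arguments. Unset Strict Implicit. Unset Printing Implicit Defensive.
Import Order.TTheory.
Local Open Scope order_scope.

Section BC.
Context {d : Order.disp_t} (L : finTBLatticeType d).

(* x is meet-irreducible: for every X ⊆ L, x = ⋀X implies x ∈ X
   (the empty meet is \top, so \top is not meet-irreducible). *)
Definition meet_irr (x : L) : bool :=
  [forall X : {set L}, (x == \meet_(y in X) y) ==> (x \in X)].

Definition Mirr : {set L} := [set x | meet_irr x].

Definition is_filterM (S : {set L}) : bool :=
  (S \subset Mirr) &&
  [forall x in S, forall y in Mirr, (x <= y) ==> (y \in S)].

(* carrier of BC(L) = (F(M(L)), ⊇); its binary join is intersection *)
Definition BC : {set {set L}} := [set S | is_filterM S].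

Definition iotaBC (x : L) : {set L} := [set m in Mirr | x <= m].

End BC.

(* Main.v *)
Require Import Defs.
From HB Require Import structures.
From mathcomp Require Import all_boot all_order.
Import Order.TTheory.
Local Open Scope order_scope.

Section Gen.
Context {d' : Order.disp_t} (T : distrLatticeType d').

Lemma bm_le (I : eqType) (r : seq I) (P : pred I) (F : I -> T) idx i :
  i \in r -> P i -> \big[Order.meet/idx]_(j <- r | P j) F j <= F i.
Proof.
elim: r => // a r IH; rewrite in_cons big_cons => /orP[/eqP<- ->|ir Pi].
  by rewrite leIl.
case: (P a); last exact: IH.
by apply: leIxr; apply: IH.
Qed.

Lemma le_bm (I : eqType) (r : seq I) (P : pred I) (F : I -> T) idx v :
  v <= idx -> (forall i, P i -> v <= F i) ->
  v <= \big[Order.meet/idx]_(j <- r | P j) F j.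
Proof.
move=> hi hF; elim/big_rec: _ => // i x Pi hx; by rewrite lexI hF.
Qed.

Lemma le_join_bm (I : eqType) (r : seq I) (P : pred I) (F : I -> T) idx v c :
  v <= idx `|` c -> (forall i, P i -> v <= F i `|` c) ->
  v <= \big[Order.meet/idx]_(j <- r | P j) F j `|` c.
Proof.
move=> hi hF; elim/big_rec: _ => // i x Pi hx.
by rewrite joinC joinIr lexI joinC hF //= joinC.
Qed.
End Gen.

Section Main.
Context {d : Order.disp_t} (L : finTBLatticeType d).

Lemma top_not_irr : (\top : L) \notin Mirr L.
Proof.
rewrite inE /meet_irr; apply/forallP => /(_ set0); rewrite big_set0 eqxx /=.
by rewrite inE.
Qed.

Lemma exists_irr (x y : L) : ~~ (y <= x) ->
  exists2 m, m \in Mirr L & (x <= m) && ~~ (y <= m).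
Proof.
move=> yx.
pose P := fun z : L => (x <= z) && ~~ (y <= z).
have Px : P x by rewrite /P lexx.
case: (arg_minnP (fun z => #|[set w | z <= w]|) Px) => m Pm hmin.
exists m => //; rewrite inE /meet_irr; apply/forallP => X; apply/implyP => /eqP hm.
apply/negPn/negP => mX.
case/andP: Pm => xm /negP; apply; rewrite hm; apply: meets_ge => z zX.
have mz : m <= z by rewrite hm; apply: meets_inf.
have nmz : z != m by apply: contraNneq mX => <-.
apply/negPn/negP => yz.
have Pz : P z by rewrite /P yz (le_trans xm mz).
have := hmin z Pz; apply/negP; rewrite -ltnNge; apply: proper_card.
rewrite properE; apply/andP; split.
  by apply/subsetP => w; rewrite !inE => /(le_trans mz).
apply/subsetPn; exists m; rewrite !inE ?lexx //.
by apply/negP => zm; case/negP: nmz; rewrite eq_le zm mz.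
Qed.

Lemma iota_sub (x y : L) : iotaBC x \subset iotaBC y -> y <= x.
Proof.
move=> sub; apply/negPn/negP => /exists_irr [m mM /andP[xm ym]].
have : m \in iotaBC x by rewrite /iotaBC inE mM xm.
by move/(subsetP sub); rewrite inE mM (negbTE ym).
Qed.

Lemma iota_join (x y : L) : iotaBC (x `|` y) = iotaBC x :&: iotaBC y.
Proof. by apply/setP => m; rewrite /iotaBC !inE leUx; case: (meet_irr m). Qed.

Lemma irr_star (m : L) : m \in Mirr L ->
  let ms := \meet_(y in [set y | m < y]) y in
  m < ms /\ forall n, ~~ (n <= m) -> ms <= n `|` m.
Proof.
move=> mM ms; split.
  rewrite lt_def; apply/andP; split; last by apply: meets_ge => z; rewrite inE => /ltW.
  apply/negP => /eqP hm; move: mM; rewrite inE /meet_irr => /forallP/(_ [set y | m < y]).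
  by rewrite -{1}hm /ms eqxx /= inE ltxx.
move=> n nm; apply: meets_inf; rewrite inE lt_def leUr andbT.
by apply: contraNneq nm => <-; rewrite leUl.
Qed.
End Main.

Theorem mainTheorem3 (d : Order.disp_t) (L : finTBLatticeType d)
  (d' : Order.disp_t) (Lh : distrLatticeType d') (phi : L -> Lh) :
  injective phi -> {morph phi : x y / x `|` y} ->
  exists eps : {set L} -> Lh,
    [/\ {in BC L &, injective eps},
        {in BC L &, forall A B, eps (A :&: B) = eps A `|` eps B}
      & forall x : L, phi x = eps (iotaBC x)].
Proof.
move=> inj hj.
have mono : forall x y, x <= y -> phi x <= phi y.
  by move=> x y; rewrite !leEjoin -hj => /eqP->.
have monoR : forall x y, phi x <= phi y -> x <= y.
  by move=> x y; rewrite !leEjoin -hj => /eqP/inj->.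
pose eps (S : {set L}) :=
  \big[Order.meet/phi \top]_(x | iotaBC x \subset S) phi x.
have iotatop : iotaBC (\top : L) = set0.
  apply/setP => m; rewrite /iotaBC !inE; apply/negP => /andP[mM tm].
  have e : m = \top by apply/eqP; rewrite eq_le lex1.
  by move: (top_not_irr L); rewrite -e inE mM.
have epsle : forall (S : {set L}) (x : L), iotaBC x \subset S -> eps S <= phi x.
  by move=> S x sx; apply: bm_le => //; rewrite mem_index_enum.
have epsge : forall (S : {set L}) (v : Lh), (forall x, iotaBC x \subset S -> v <= phi x) -> v <= eps S.
  move=> S v hv; apply: le_bm => //; apply: hv; by rewrite iotatop sub0set.
have epstop : forall S : {set L}, eps S <= phi \top.
  by move=> S; apply: epsle; rewrite iotatop sub0set.
have hjoin : forall A B : {set L}, eps (A :&: B) = eps A `|` eps B.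
  move=> A B; apply/eqP; rewrite eq_le leUx; apply/andP; split; last (apply/andP; split).
  2: by apply: epsge => x sx; apply: epsle; apply: subset_trans sx (subsetIl _ _).
  2: by apply: epsge => x sx; apply: epsle; apply: subset_trans sx (subsetIr _ _).
  apply: le_join_bm.
    by apply: le_trans (epstop _) _; rewrite ?leUl ?leUr.
  move=> x sx; rewrite joinC; apply: le_join_bm.
    by apply: le_trans (epstop _) _; rewrite ?leUl ?leUr.
  move=> y sy; rewrite -hj; apply: epsle; rewrite iota_join.
  by rewrite setIC; apply: setISS.
exists eps; split.
- have key : forall A B : {set L}, A \in BC L -> eps A = eps B -> A \subset B.
    move=> A B; rewrite inE => /andP[AM /forallP hA] eAB.
    apply/subsetP => m mA; apply/negPn/negP => mB.
    have mM : m \in Mirr L by apply: (subsetP AM).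
    have [hlt hs] := @irr_star _ L m mM.
    set ms := \meet_(y in _) y in hlt hs.
    have e1 : eps B <= phi m.
      rewrite -eAB; apply: epsle; apply/subsetP => z; rewrite inE => /andP[zM mz].
      by move: (hA m); rewrite mA /= => /forallP/(_ z); rewrite zM mz.
    have : phi ms <= eps B `|` phi m.
      apply: le_join_bm.
        rewrite -hj; apply: mono; apply: hs; apply/negP => tm.
        have e : m = \top by apply/eqP; rewrite eq_le lex1.
        by move: (top_not_irr L); rewrite -e mM.
      move=> x sx; rewrite -hj; apply: mono; apply: hs; apply/negP => xm.
      have : m \in iotaBC x by rewrite /iotaBC inE mM xm.
      by move/(subsetP sx); rewrite (negbTE mB).
    rewrite (join_r e1) => /monoR hle.
    by move: hlt; rewrite lt_def => /andP[/negP ne hle2]; apply: ne; rewrite eq_le hle hle2.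
  move=> A B hA hB e; apply/eqP; rewrite eqEsubset; apply/andP; split.
    exact: key.
  exact: key (esym e).
- by move=> A B _ _; apply: hjoin.
- move=> x; apply/eqP; rewrite eq_le; apply/andP; split.
    by apply: epsge => y /iota_sub; apply: mono.
  by apply: epsle.
Qed.
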